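(* Let $C$ be a saturated set of atomic constraints and let $I$ be a set of refinement variables. Let $\theta$ be a solution of the restriction $C|_I$. Then there is a solution $\theta'$ of $C$ such that $\theta'(X)(d) = \theta(X)(d)$ for all $X \in I$ and all datatypes $d$.
   Context: Fix a finite set $\underline{D}$ of datatype identifiers. Each $d \in \underline{D}$ has a finite set $\mathrm{Con}(d)$ of constructors. There is a countable supply of refinement variables $X, Y, Z, \dots$. An assignment $\theta$ maps each refinement variable $X$ to a function that sends each $d \in \underline{D}$ to a subset $\theta(X)(d) \subseteq \mathrm{Con}(d)$. A constructor set expression over $d$ is either a finite set $\{k_1,\dots,k_m\} \subseteq \mathrm{Con}(d)$ or a pair $X(d)$. Its meaning is $\theta[\![X(d)]\!] = \theta(X)(d)$ and $\theta[\![\{k_1,\dots,k_m\}]\!] = \{k_1,\dots,k_m\}$. An inclusion $S_1 \subseteq S_2$ relates two expressions over the same $d$, and $k \in S$ abbreviates $\{k\} \subseteq S$. A (conditional) constraint $\phi \mathbin{?} S_1 \subseteq S_2$ consists of a finite guard set $\phi$ of inclusions of the form $k \in X(d)$ together with a body $S_1 \subseteq S_2$. $\theta$ satisfies $\phi \mathbin{?} S_1 \subseteq S_2$ if the following holds: whenever $k \in \theta(X)(d)$ for all $k \in X(d)$ in $\phi$, then $\theta[\![S_1]\!] \subseteq \theta[\![S_2]\!]$. A solution of a set of constraints is an assignment satisfying all of them. A constraint is atomic if its body has one of the forms $X(d) \subseteq Y(d)$, $X(d) \subseteq \{k_1,\dots,k_m\}$, $k \in X(d)$, or $k \in \emptyset$.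 Conclusions of rules are converted to atomic form, as follows. A body $\{k_1,\dots,k_m\} \subseteq S$ becomes the bodies $k_i \in S$. A body $k \in \{k_1,\dots,k_m\}$ is dropped if $k$ is among the $k_i$, and becomes $k \in \emptyset$ otherwise. An atomic set $C$ is saturated if it is closed under the following rules: - (Transitivity) from $\phi \mathbin{?} S_1 \subseteq S_2$ and $\psi \mathbin{?} S_2 \subseteq S_3$, derive $\phi \cup \psi \mathbin{?} S_1 \subseteq S_3$; - (Satisfaction) from $\phi \mathbin{?} k \in X(d)$ and $\psi \cup \{k \in X(d)\} \mathbin{?} S_1 \subseteq S_2$, derive $\phi \cup \psi \mathbin{?} S_1 \subseteq S_2$; - (Weakening) from $\phi \mathbin{?} X(d) \subseteq Y(d)$ and $\psi \cup \{k \in Y(d)\} \mathbin{?} S_1 \subseteq S_2$, derive $\phi \cup \psi \cup \{k \in X(d)\} \mathbin{?} S_1 \subseteq S_2$. For a set $I$ of refinement variables, the restriction $C|_I$ is the set of those constraints in $C$ all of whose refinement variables (occurring in the guard or the body) lie in $I$. *)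

(* Defs.v *)
From HB Require Import structures.
From mathcomp Require Import all_boot.
From mathcomp Require Import finmap.
From Stdlib Require Lists.List.

Set Implicit Arguments.
Unset Strict Implicit.
Unset Printing Implicit Defensive.

Local Open Scope fset_scope.

Section Constraints.

(* Datatype identifiers: a finite type D; constructors of d: a finite type Con d. *)
Variable D : finType.
Variable Con : D -> finType.

Definition rvar := nat.

Definition assignment := rvar -> forall d : D, {set Con d}.

Inductive sexpr (d : D) : Type :=
  | SVar of rvar
  | SLit of {set Con d}.
Arguments SVar d X.
Arguments SLit {d} s.

Definition sem (th : assignment) (d : D) (S : sexpr d) : {set Con d} :=
  match S with SVar X => th X d | SLit s => s end.

Inductive body : Type := Incl (d : D) (S1 S2 : sexpr d).

(* Guard atoms  k \in X(d),  encoded as (X, (d; k)). *)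
Definition gatom : choiceType := (rvar * {d : D & Con d})%type.
Definition gatom_of (X : rvar) (d : D) (k : Con d) : gatom := (X, Tagged Con k).

(* A conditional constraint  phi ? S1 <= S2  with phi a finite set of guard atoms. *)
Record cstr : Type := Cstr { guard : {fset gatom}; cbody : body }.

Definition guard_holds (th : assignment) (a : gatom) : Prop :=
  tagged a.2 \in th a.1 (tag a.2).

Definition body_holds (th : assignment) (b : body) : Prop :=
  match b with Incl d S1 S2 => sem th S1 \subset sem th S2 end.

Definition satisfies (th : assignment) (c : cstr) : Prop :=
  (forall a, a \in guard c -> guard_holds th a) -> body_holds th (cbody c).

Definition solution (th : assignment) (C : cstr -> Prop) : Prop :=
  forall c, C c -> satisfies th c.

Definition mem_body (d : D) (k : Con d) (S : sexpr d) : body :=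
  Incl (SLit [set k]) S.

Definition atomic_body (b : body) : Prop :=
  match b with
  | Incl d (SVar _) _ => True
  | Incl d (SLit s) (SVar _) => exists k, s = [set k]
  | Incl d (SLit s) (SLit t) => (exists k, s = [set k]) /\ t = set0
  end.

Definition atomic (c : cstr) : Prop := atomic_body (cbody c).

Definition atomize_mem (d : D) (k : Con d) (S : sexpr d) : seq body :=
  match S with
  | SVar _ => [:: mem_body k S]
  | SLit t => if k \in t then [::] else [:: mem_body k (SLit set0)]
  end.

Definition atomize (b : body) : seq body :=
  match b with
  | Incl d (SVar X) S2 => [:: Incl (SVar d X) S2]
  | Incl d (SLit s) S2 => flatten [seq atomize_mem k S2 | k <- enum s]
  end.

(* "C contains the conclusion phi ? b", after conversion to atomic form. *)
Definition derives (C : cstr -> Prop) (phi : {fset gatom}) (b : body) : Prop :=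
  forall b', Stdlib.Lists.List.In b' (atomize b) -> C (Cstr phi b').

Definition saturated (C : cstr -> Prop) : Prop :=
  (forall (d : D) (phi psi : {fset gatom}) (S1 S2 S3 : sexpr d),
      C (Cstr phi (Incl S1 S2)) -> C (Cstr psi (Incl S2 S3)) ->
      derives C (phi `|` psi) (Incl S1 S3)) /\
  (forall (d : D) (k : Con d) (X : rvar) (phi psi : {fset gatom}) (b : body),
      C (Cstr phi (mem_body k (SVar d X))) ->
      C (Cstr (gatom_of X k |` psi) b) ->
      derives C (phi `|` psi) b) /\
  (forall (d : D) (k : Con d) (X Y : rvar) (phi psi : {fset gatom}) (b : body),
      C (Cstr phi (Incl (SVar d X) (SVar d Y))) ->
      C (Cstr (gatom_of Y k |` psi) b) ->
      derives C (phi `|` psi `|` [fset gatom_of X k]) b).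

Definition sexpr_vars (d : D) (S : sexpr d) : seq rvar :=
  match S with SVar X => [:: X] | SLit _ => [::] end.

Definition body_vars (b : body) : seq rvar :=
  match b with Incl d S1 S2 => sexpr_vars S1 ++ sexpr_vars S2 end.

Definition cstr_vars (c : cstr) : seq rvar :=
  [seq a.1 | a <- enum_fset (guard c)] ++ body_vars (cbody c).

Definition restrict (C : cstr -> Prop) (I : rvar -> Prop) : cstr -> Prop :=
  fun c => C c /\ (forall X, X \in cstr_vars c -> I X).

End Constraints.

(* Main.v *)
Require Import Defs.
From HB Require Import structures.
From mathcomp Require Import all_boot.
From mathcomp Require Import finmap.
From Stdlib Require Import ClassicalEpsilon.

Set Implicit Arguments.
Unset Strict Implicit.
Unset Printing Implicit Defensive.
Local Open Scope fset_scope.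

Definition pb (P : Prop) : bool :=
  if excluded_middle_informative P then true else false.

Lemma pbE (P : Prop) : pb P = true <-> P.
Proof. rewrite /pb; case: excluded_middle_informative => //. Qed.

Lemma In_flatten_map (A B : Type) (f : A -> seq B) (l : seq A) (x : A) (b : B) :
  List.In x l -> List.In b (f x) -> List.In b (flatten (map f l)).
Proof.
elim: l => //= y l IH [->|Hx] Hb.
- elim: (f x) Hb => //= z s IHs [->|H]; [by left | by right; apply: IHs].
- elim: (f y) => //= [|z s IHs]; [exact: IH | by right].
Qed.

Lemma In_enum (T : finType) (s : {set T}) (k : T) : k \in s -> List.In k (enum s).
Proof.
rewrite -mem_enum; elim: (enum s) => //= y l IH.
rewrite in_cons => /orP [/eqP ->|H]; [by left | by right; apply: IH].
Qed.

Lemma atomize_atomic (D : finType) (Con : D -> finType) (b : body Con) :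
  atomic_body b -> atomize b = [:: b].
Proof.
case: b => d [X|s] [Y|t] //=.
- by case=> k ->; rewrite enum_set1.
- by case=> [[k ->] ->]; rewrite enum_set1 /= in_set0.
Qed.

Definition src_ok (D : finType) (Con : D -> finType) (I : rvar -> Prop) (d : D)
  (S : sexpr Con d) : Prop :=
  match S with SVar X => I X | SLit _ => True end.

Definition Ionly (D : finType) (Con : D -> finType) (I : rvar -> Prop)
  (phi : {fset gatom Con}) := forall a, a \in phi -> I a.1.

Definition gsat (D : finType) (Con : D -> finType) (th : assignment Con)
  (phi : {fset gatom Con}) := forall a, a \in phi -> guard_holds th a.

Definition Pin (D : finType) (Con : D -> finType) (C : cstr Con -> Prop)
  (I : rvar -> Prop) (th : assignment Con) (Y : rvar) (d : D) (k : Con d) : Prop :=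
  exists (phi : {fset gatom Con}) (S : sexpr Con d),
    [/\ C (Cstr phi (Incl S (SVar Con d Y))), Ionly I phi, gsat th phi,
        src_ok I S & k \in sem th S].

Definition thp (D : finType) (Con : D -> finType) (C : cstr Con -> Prop)
  (I : rvar -> Prop) (th : assignment Con) : assignment Con :=
  fun X d => if excluded_middle_informative (I X) then th X d
             else [set k | pb (Pin C I th X k)].

Theorem theorem9p3 (D : finType) (Con : D -> finType)
    (C : cstr Con -> Prop) (I : rvar -> Prop) (th : assignment Con) :
  (forall c, C c -> atomic c) ->
  saturated C ->
  solution th (restrict C I) ->
  exists th' : assignment Con,
    solution th' C /\ (forall X, I X -> forall d : D, th' X d = th X d).
Proof.
move=> Hat [Htr [Hsa Hwk]] Hsol.
set th' := thp C I th.
have agree : forall X, I X -> forall d, th' X d = th X d.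
  by move=> X HX d; rewrite /th' /thp; destruct (excluded_middle_informative (I X)).
have nagree : forall X, ~ I X -> forall d k, (k \in th' X d) <-> Pin C I th X k.
  move=> X HX d k; rewrite /th' /thp; destruct (excluded_middle_informative (I X)) => //.
  by rewrite inE; apply: pbE.
have semok : forall d (S : sexpr Con d), src_ok I S -> sem th' S = sem th S.
  by move=> d [X|s] //= HX; rewrite agree.
have gsat_I : forall phi, Ionly I phi -> gsat th phi -> gsat th' phi.
  move=> phi HI Hg [X [d k]] Ha; have := Hg _ Ha; have := HI _ Ha.
  by rewrite /guard_holds /= => HX; rewrite agree.
have inR : forall phi d (S1 S2 : sexpr Con d), C (Cstr phi (Incl S1 S2)) ->
    Ionly I phi -> src_ok I S1 -> src_ok I S2 -> restrict C I (Cstr phi (Incl S1 S2)).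
  move=> phi d S1 S2 HC HI H1 H2; split => // X; rewrite /cstr_vars mem_cat.
  case/orP => [/mapP [a Ha ->]|]; first by apply: HI.
  rewrite /= mem_cat; clear HC; case: S1 H1 => [Z|s] H1; case: S2 H2 => [W|t] H2 //=;
    rewrite ?in_cons ?in_nil ?orbF ?orFb; try by move/eqP ->.
  by case/orP => /eqP ->.
have IonlyU : forall A B : {fset gatom Con}, Ionly I A -> Ionly I B -> Ionly I (A `|` B).
  by move=> A B HA HB a; rewrite in_fsetU => /orP [/HA|/HB].
have gsatU : forall A B : {fset gatom Con}, gsat th A -> gsat th B -> gsat th (A `|` B).
  by move=> A B HA HB a; rewrite in_fsetU => /orP [/HA|/HB].
have LA : forall phi d (S1 S2 : sexpr Con d) k, C (Cstr phi (Incl S1 S2)) ->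
    Ionly I phi -> gsat th phi -> src_ok I S1 -> k \in sem th S1 -> k \in sem th' S2.
  move=> phi d S1 S2 k HC HI Hg H1 Hk.
  case: S2 HC => [Y|t] HC.
    case: (excluded_middle_informative (I Y)) => HY.
      have := Hsol _ (inR _ _ _ _ HC HI H1 HY) Hg => /= /subsetP.
      by rewrite /= agree //; apply.
    by rewrite /= nagree //; exists phi, S1; split.
  have := Hsol _ (inR _ _ _ _ HC HI H1 Logic.I) Hg => /= /subsetP.
  by apply.
have LB : forall phi d (S1 S2 : sexpr Con d) k, C (Cstr phi (Incl S1 S2)) ->
    Ionly I phi -> gsat th phi -> k \in sem th' S1 -> k \in sem th' S2.
  move=> phi d S1 S2 k HC HI Hg Hk.
  case: S1 HC Hk => [X|s] HC Hk; last by apply: (LA _ _ (SLit s) _ _ HC).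
  case: (excluded_middle_informative (I X)) => HX.
    by apply: (LA _ _ (SVar Con d X) _ _ HC) => //=; rewrite -agree.
  move: Hk; rewrite /= nagree // => -[psi [S [HC' HI' Hg' HS Hk]]].
  have Hd := Htr _ _ _ _ _ _ HC' HC.
  case: S HC' HS Hk Hd => [Z|s] HC' HS Hk Hd.
    apply: (LA (psi `|` phi) _ (SVar Con d Z)) => //; [|exact: IonlyU|exact: gsatU].
    by apply: Hd; left.
  case: S2 HC Hd => [Y|t] HC Hd.
    apply: (LA (psi `|` phi) _ (SLit [set k])); last by rewrite /= set11.
    - apply: Hd; apply: (In_flatten_map (x := k)); first exact: In_enum.
      by left.
    - exact: IonlyU.
    - exact: gsatU.
    - by [].
  rewrite /=; case Hkt: (k \in t) => //.
  have : k \in sem th' (SLit set0); last by rewrite /= in_set0.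
  apply: (LA (psi `|` phi) _ (SLit [set k])); last by rewrite /= set11.
  - apply: Hd; apply: (In_flatten_map (x := k)); first exact: In_enum.
    by rewrite /= Hkt; left.
  - exact: IonlyU.
  - exact: gsatU.
  - by [].
have GE : forall (L : seq (gatom Con)) phi b, C (Cstr phi b) ->
    (forall a, a \in phi -> ~ I a.1 -> a \in L) -> gsat th' phi ->
    exists phi', [/\ C (Cstr phi' b), Ionly I phi' & gsat th phi'].
  elim=> [|a L IH] phi b HC HL Hg.
    have HI : Ionly I phi.
      by move=> a Ha; apply: NNPP => Hn; move: (HL _ Ha Hn).
    exists phi; split => // a' Ha'; move: (Hg _ Ha') (HI _ Ha').
    by case: a' Ha' => X [d k] _; rewrite /guard_holds /= => H HX; rewrite -agree.
  case: (boolP (a \in phi)) => Ha; last first.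
    apply: (IH phi) => // a' Ha' Hn; move: (HL _ Ha' Hn).
    by rewrite in_cons => /orP [/eqP Heq|//]; move: Ha; rewrite -Heq Ha'.
  case: (excluded_middle_informative (I a.1)) => HIa.
    apply: (IH phi) => // a' Ha' Hn; move: (HL _ Ha' Hn).
    by rewrite in_cons => /orP [/eqP Heq|//]; case: Hn; rewrite Heq.
  have Hb := Hat _ HC; rewrite /atomic /= in Hb.
  have HCb : forall phi', derives C phi' b -> C (Cstr phi' b).
    by move=> phi' Hd; apply: Hd; rewrite atomize_atomic //; left.
  have Hga := Hg _ Ha.
  move: Ha Hga HIa HL; case: a => X [d k] Ha Hga HIa HL.
  rewrite /guard_holds /= nagree // in Hga.
  case: Hga => psi [S [HC' HI' Hg' HS Hk]].
  have Hphi : gatom_of X k |` (phi `\ (X, Tagged Con k)) = phi by rewrite fsetD1K.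
  have HLr : forall a', a' \in phi `\ (X, Tagged Con k) -> ~ I a'.1 -> a' \in L.
    move=> a' /fsetD1P [Hne Ha'] Hn; move: (HL _ Ha' Hn).
    by rewrite in_cons (negbTE Hne).
  have gsatD : gsat th' (phi `\ (X, Tagged Con k)).
    by move=> a' /fsetD1P [_ Ha']; apply: Hg.
  case: S HC' HS Hk => [Z|s] HC' HS Hk.
    have Hd := Hwk _ k _ _ _ (phi `\ (X, Tagged Con k)) b HC'.
    rewrite /gatom_of Hphi in Hd; have := HCb _ (Hd HC) => HC2.
    apply: (IH _ _ HC2).
      move=> a'; rewrite !in_fsetU => /orP [/orP [/HI'|]|] //.
        by move=> H Hn; apply: HLr.
      by rewrite in_fset1 => /eqP -> /=.
    move=> a'; rewrite !in_fsetU => /orP [/orP [H|H]|].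
    - exact: (gsat_I _ HI' Hg').
    - exact: gsatD.
    - by rewrite in_fset1 => /eqP -> ; rewrite /guard_holds /= agree.
  have := Hat _ HC'; rewrite /atomic /= => -[k' Hs].
  move: Hk; rewrite /= Hs in_set1 => /eqP Hkk; subst s; subst k'.
  have Hd := Hsa _ k _ _ (phi `\ (X, Tagged Con k)) b HC'.
  rewrite /gatom_of Hphi in Hd; have := HCb _ (Hd HC) => HC2.
  apply: (IH _ _ HC2).
    move=> a'; rewrite !in_fsetU => /orP [/HI'|] //.
    by move=> H Hn; apply: HLr.
  move=> a'; rewrite !in_fsetU => /orP [H|H].
  - exact: (gsat_I _ HI' Hg').
  - exact: gsatD.
exists th'; split => //.
case=> phi [d S1 S2] HC Hg.
have [phi' [HC' HI' Hg']] := GE (enum_fset phi) phi _ HC (fun a Ha _ => Ha) Hg.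
by apply/subsetP => k; apply: (LB _ _ _ _ _ HC').
Qed.
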